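(* Let $V$ be a vector space of dimension $2r$ ($r\ge1$) over $\mathbb{F}_2$ with nondegenerate quadratic form $Q$. Then $V$ has a symmetric basis if and only if either $Q$ is hyperbolic and $r\equiv 0$ or $1\pmod 4$, or $Q$ is elliptic and $r\equiv 2$ or $3\pmod 4$.
   Context: The associated bilinear form of $Q$ is $B(u,v)=Q(u+v)-Q(u)-Q(v)$, and $Q$ is nondegenerate if $B$ is. $Q$ is hyperbolic if $V$ has a basis $e_1,\dots,e_r,f_1,\dots,f_r$ with $Q(e_i)=Q(f_i)=0$, $B(e_i,e_j)=B(f_i,f_j)=0$, $B(e_i,f_j)=\delta_{ij}$; it is elliptic if $V$ has a basis $e_1,\dots,e_{r-1},f_1,\dots,f_{r-1},x,y$ with the same relations among the $e_i,f_i$, all $e_i,f_i$ orthogonal to $x,y$, $Q(x)=Q(y)=1$, $B(x,y)=1$. A basis $\{v_1,\dots,v_{2r}\}$ is symmetric if $Q(v_i)=0$ for all $i$ and $B(v_i,v_j)=1$ for all $i\ne j$. *)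

(* Defs.v *)
From HB Require Import structures.
From mathcomp Require Import all_boot all_order all_algebra.
Set Implicit Arguments. Unset Strict Implicit. Unset Printing Implicit Defensive.
Import GRing.Theory.
Local Open Scope ring_scope.

Section QuadForms.
Variables (K : fieldType) (V : vectType K).

Definition assoc_bilin (Q : V -> K) (u v : V) : K := Q (u + v) - Q u - Q v.

(* Q is a quadratic form: Q(a v) = a^2 Q(v) and B is bilinear
   (linearity in the first argument; B is symmetric by definition) *)
Definition is_quadratic_form (Q : V -> K) : Prop :=
  (forall (a : K) (v : V), Q (a *: v) = a ^+ 2 * Q v) /\
  (forall u v w : V, assoc_bilin Q (u + v) w = assoc_bilin Q u w + assoc_bilin Q v w) /\
  (forall (a : K) (u v : V), assoc_bilin Q (a *: u) v = a * assoc_bilin Q u v).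

Definition qf_nondegenerate (Q : V -> K) : Prop :=
  forall u : V, (forall v : V, assoc_bilin Q u v = 0) -> u = 0.

Definition qf_hyperbolic (Q : V -> K) : Prop :=
  exists (n : nat) (e f : 'I_n -> V),
    basis_of fullv ([seq e i | i <- enum 'I_n] ++ [seq f i | i <- enum 'I_n]) /\
    forall i j : 'I_n,
      [/\ Q (e i) = 0, Q (f i) = 0,
          assoc_bilin Q (e i) (e j) = 0, assoc_bilin Q (f i) (f j) = 0 &
          assoc_bilin Q (e i) (f j) = (i == j)%:R].

Definition qf_elliptic (Q : V -> K) : Prop :=
  exists (n : nat) (e f : 'I_n -> V) (x y : V),
    basis_of fullv ([seq e i | i <- enum 'I_n] ++ [seq f i | i <- enum 'I_n] ++ [:: x; y]) /\
    (forall i j : 'I_n,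
      [/\ Q (e i) = 0, Q (f i) = 0,
          assoc_bilin Q (e i) (e j) = 0, assoc_bilin Q (f i) (f j) = 0 &
          assoc_bilin Q (e i) (f j) = (i == j)%:R]) /\
    (forall i : 'I_n,
      [/\ assoc_bilin Q (e i) x = 0, assoc_bilin Q (e i) y = 0,
          assoc_bilin Q (f i) x = 0 & assoc_bilin Q (f i) y = 0]) /\
    Q x = 1 /\ Q y = 1 /\ assoc_bilin Q x y = 1.

Definition symmetric_basis (Q : V -> K) (s : seq V) : Prop :=
  basis_of fullv s /\
  (forall i, (i < size s)%N -> Q s`_i = 0) /\
  (forall i j, (i < size s)%N -> (j < size s)%N -> i != j -> assoc_bilin Q s`_i s`_j = 1).

Definition has_symmetric_basis (Q : V -> K) : Prop :=
  exists s : seq V, symmetric_basis Q s.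

End QuadForms.

(* Main.v *)
Require Import Defs.
From HB Require Import structures.
From mathcomp Require Import all_boot all_order all_algebra zify.
Set Implicit Arguments. Unset Strict Implicit. Unset Printing Implicit Defensive.
Import GRing.Theory.
Local Open Scope ring_scope.

Lemma F2_cases (a : 'F_2) : a = 0 \/ a = 1.
Proof. case: a => [[|[|]]] //= H; [left|right]; exact/val_inj. Qed.

Lemma F2_opp (a : 'F_2) : - a = a.
Proof. apply: oppr_pchar2. exact: (@pchar_Fp 2). Qed.

Lemma F2_addrr (a : 'F_2) : a + a = 0.
Proof. by case: (F2_cases a) => ->; apply/eqP. Qed.

Section QF.
Variables (V : vectType 'F_2) (Q : V -> 'F_2).
Hypothesis qf : is_quadratic_form Q.
Local Notation B := (assoc_bilin Q).

Lemma BDl u v w : B (u + v) w = B u w + B v w.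
Proof. by case: qf => _ [H _]; apply: H. Qed.
Lemma BZl a u v : B (a *: u) v = a * B u v.
Proof. by case: qf => _ [_ H]; apply: H. Qed.
Lemma QZ a v : Q (a *: v) = a ^+ 2 * Q v.
Proof. by case: qf => H _; apply: H. Qed.
Lemma Bsym u v : B u v = B v u.
Proof. by rewrite /assoc_bilin [u + v]addrC addrAC. Qed.
Lemma BDr u v w : B w (u + v) = B w u + B w v.
Proof. by rewrite !(Bsym w) BDl. Qed.
Lemma B0l w : B 0 w = 0.
Proof. have := BDl 0 0 w; rewrite addr0 => /(congr1 (fun t => t - B 0 w)). by rewrite subrr addrK => /esym. Qed.
Lemma B0r w : B w 0 = 0.
Proof. by rewrite Bsym B0l. Qed.
Lemma Bxx x : B x x = 0.
Proof.
rewrite /assoc_bilin.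
have -> : x + x = (1 + 1 : 'F_2) *: x by rewrite scalerDl scale1r.
by rewrite QZ F2_addrr expr0n /= mul0r sub0r -opprD F2_opp F2_addrr.
Qed.
Lemma QD u v : Q (u + v) = Q u + Q v + B u v.
Proof.
rewrite /assoc_bilin !F2_opp.
case: (F2_cases (Q u)) => ->; case: (F2_cases (Q v)) => ->;
case: (F2_cases (Q (u + v))) => ->; by apply/eqP.
Qed.
Lemma Bsuml I (r : seq I) (P : pred I) (F : I -> V) w :
  B (\sum_(i <- r | P i) F i) w = \sum_(i <- r | P i) B (F i) w.
Proof. exact: (big_morph (fun u => B u w) (fun u v => BDl u v w) (B0l w)). Qed.

Ltac symmetrize := repeat match goal with
  H : assoc_bilin Q ?u ?v = ?c |- _ =>
    lazymatch goal with
    | _ : assoc_bilin Q v u = c |- _ => fail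
    | _ => have := etrans (Bsym v u) H; move=> ?
    end end.
Ltac bsimp := symmetrize; rewrite ?QD ?BDl ?BDr ?Bxx;
  repeat match goal with
  | H : assoc_bilin Q ?u ?v = _ |- context [assoc_bilin Q ?u ?v] => rewrite H
  | H : Q ?u = _ |- context [Q ?u] => rewrite H
  end.
Ltac f2 := bsimp; apply/eqP; by [].

Definition orthS w (s : seq V) := all (fun v => B w v == 0) s.
Definition orthP w (P : seq (V * V)) :=
  all (fun pr => (B w pr.1 == 0) && (B w pr.2 == 0)) P.
Fixpoint symp (P : seq (V * V)) := match P with
  | [::] => true
  | (a, b) :: P' => [&& B a b == 1, orthP a P', orthP b P' & symp P'] end.
Fixpoint altQ (c : bool) (P : seq (V * V)) := match P with
  | [::] => true
  | (a, b) :: P' => [&& Q a == c%:R, Q b == c%:R & altQ (~~ c) P'] end.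
Definition allhyp (P : seq (V * V)) :=
  all (fun pr => (Q pr.1 == 0) && (Q pr.2 == 0)) P.
Definition normP (d : bool) (P : seq (V * V)) :=
  if d then (match P with (x, y) :: P' => [&& Q x == 1, Q y == 1 & allhyp P']
             | _ => false end) else allhyp P.
Definition famb (c : bool) (s : seq V) :=
  all (fun v => Q v == c%:R) s && pairwise (fun u v => B u v == 1) s.

Lemma orthS_add u v s : orthS u s -> orthS v s -> orthS (u + v) s.
Proof.
move=> /allP Hu /allP Hv; apply/allP => x xs.
by rewrite BDl (eqP (Hu x xs)) (eqP (Hv x xs)) addr0.
Qed.
Lemma orthP_add u v P : orthP u P -> orthP v P -> orthP (u + v) P.
Proof.
move=> /allP Hu /allP Hv; apply/allP => x xs.
case/andP: (Hu x xs) => /eqP h1 /eqP h2; case/andP: (Hv x xs) => /eqP h3 /eqP h4.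
by rewrite !BDl h1 h2 h3 h4 !addr0 eqxx.
Qed.

Lemma pairwise_sub_in (T : eqType) (r r' : rel T) (s : seq T) :
  {in s &, forall u v, r u v -> r' u v} -> pairwise r s -> pairwise r' s.
Proof.
elim: s => //= x s IH H /andP[/allP Hx Hs]; apply/andP; split.
  apply/allP => y ys; apply: H; rewrite ?inE ?eqxx ?ys ?orbT //; exact: Hx.
apply: IH => // u v us vs; apply: H; by rewrite inE ?us ?vs orbT.
Qed.

Ltac f2' := bsimp; first [ by [] | by apply/eqP ].

Lemma fam_decomp n : forall c s, size s = (2 * n)%N -> famb c s ->
  exists P, [/\ size P = n, symp P, altQ c P & forall w, orthS w s -> orthP w P].
Proof.
elim: n => [|n IH] c [|a [|b rest]] //=; try by rewrite ?mulnS.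
  by move=> _ _; exists [::]; split.
rewrite mulnS => /eqP; rewrite !eqSS => /eqP Hsz.
rewrite /famb /=.
move=> /andP[/and3P[/eqP Qa /eqP Qb /allP Qr]].
move=> /and3P[/andP[/eqP Bab /allP Bar] /allP Bbr Pr].
set rest' := map (fun v => v + (a + b)) rest.
have Hr' : famb (~~ c) rest'.
  apply/andP; split.
    rewrite all_map; apply/allP => v vr /=.
    have Qv := eqP (Qr v vr); have Bav := eqP (Bar v vr); have Bbv := eqP (Bbr v vr).
    by destruct c; f2'.
  rewrite pairwise_map; apply: (pairwise_sub_in _ Pr); move=> u v ur vr /= /eqP Buv.
  have Bav := eqP (Bar v vr); have Bbv := eqP (Bbr v vr).
  have Bau := eqP (Bar u ur); have Bbu := eqP (Bbr u ur).
  f2'.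
have Hsz' : size rest' = (2 * n)%N by rewrite size_map.
have [P [HP1 HP2 HP3 HP4]] := IH (~~ c) rest' Hsz' Hr'.
have oa : orthS a rest'.
  rewrite /orthS all_map; apply/allP => v vr /=.
  have Bav := eqP (Bar v vr); f2'.
have ob : orthS b rest'.
  rewrite /orthS all_map; apply/allP => v vr /=.
  have Bbv := eqP (Bbr v vr); f2'.
exists ((a, b) :: P); split => /=.
- by rewrite HP1.
- by rewrite Bab eqxx !HP4.
- by rewrite Qa Qb !eqxx.
- move=> w /and3P[/eqP Bwa /eqP Bwb Hw]; rewrite /orthP /= Bwa Bwb eqxx /=.
  apply: HP4; rewrite /orthS all_map; apply/allP => v vr /=.
  have Bwv := eqP (allP Hw v vr); f2'.
Qed.

Lemma fam_build P : forall c, symp P -> altQ c P ->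
  exists s, [/\ size s = (2 * size P)%N, famb c s & forall w, orthP w P -> orthS w s].
Proof.
elim: P => [|[a b] P IH] c /=.
  by move=> _ _; exists [::].
move=> /and4P[/eqP Bab oa ob sP] /and3P[/eqP Qa /eqP Qb aP].
have [s [Hs1 Hs2 Hs3]] := IH (~~ c) sP aP.
have /allP oa' := Hs3 a oa; have /allP ob' := Hs3 b ob.
case/andP: Hs2 => /allP Qs Ps.
exists (a :: b :: map (fun v => v + (a + b)) s); split.
- by rewrite /= size_map Hs1 mulnS.
- apply/andP; split.
    rewrite /= Qa Qb eqxx /= all_map; apply/allP => v vs /=.
    have Qv := eqP (Qs v vs); have Bav := eqP (oa' v vs); have Bbv := eqP (ob' v vs).
    by destruct c; f2'.
  rewrite /= Bab eqxx /= !all_map pairwise_map; apply/and3P; split.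
  + apply/allP => v vs /=; have Bav := eqP (oa' v vs); have Bbv := eqP (ob' v vs); f2'.
  + apply/allP => v vs /=; have Bav := eqP (oa' v vs); have Bbv := eqP (ob' v vs); f2'.
  + apply: (pairwise_sub_in _ Ps); move=> u v ur vr /= /eqP Buv.
    have Bav := eqP (oa' v vr); have Bbv := eqP (ob' v vr).
    have Bau := eqP (oa' u ur); have Bbu := eqP (ob' u ur); f2'.
- move=> w /andP[/andP[/eqP Bwa /eqP Bwb] Hw].
  rewrite /orthS /= Bwa Bwb eqxx /= all_map; apply/allP => v vs /=.
  have Bwv := eqP (allP (Hs3 w Hw) v vs); f2'.
Qed.

Lemma orthP_cons w a b P :
  orthP w ((a, b) :: P) = [&& B w a == 0, B w b == 0 & orthP w P].
Proof. by rewrite /orthP /= andbA. Qed.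
Lemma symp_cons a b P :
  symp ((a, b) :: P) = [&& B a b == 1, orthP a P, orthP b P & symp P].
Proof. by []. Qed.
Lemma allhyp_cons a b P :
  allhyp ((a, b) :: P) = [&& Q a == 0, Q b == 0 & allhyp P].
Proof. by rewrite /allhyp /= andbA. Qed.
Lemma altP_cons c a b P :
  altQ c ((a, b) :: P) = [&& Q a == c%:R, Q b == c%:R & altQ (~~ c) P].
Proof. by []. Qed.

Ltac crush := repeat match goal with
 | H : is_true (_ && _) |- _ => case/andP: H => ? ?
 | H : is_true (orthP _ (_ :: _)) |- _ => rewrite orthP_cons in H
 | H : is_true (symp (_ :: _)) |- _ => rewrite symp_cons in H
 | H : is_true (allhyp (_ :: _)) |- _ => rewrite allhyp_cons in H
 | H : is_true (altQ _ (_ :: _)) |- _ => rewrite altP_cons in H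
 | H : is_true (@eq_op _ (Q _) _) |- _ => move/eqP: H => H
 | H : is_true (@eq_op _ (assoc_bilin _ _ _) _) |- _ => move/eqP: H => H
 end.
Ltac propagate := repeat match goal with
  H : is_true (orthP ?v ?P), F : forall w, is_true (orthP w ?P) -> is_true (orthP w ?R) |- _ =>
    lazymatch goal with
    | _ : is_true (orthP v R) |- _ => fail
    | _ => have := F v H; move=> ?
    end end.
Ltac leaf := first [ done | f2'
  | (apply: orthP_add; leaf)
  | (match goal with H : forall w, _ -> orthP w ?R |- is_true (orthP _ ?R) => apply: H; leaf end) ].
Ltac goalsplit := repeat first [ rewrite orthP_cons | rewrite symp_cons
   | rewrite allhyp_cons | rewrite altP_cons | apply/andP; split ].

Lemma alt_norm n : forall P, size P = n -> symp P -> altQ false P ->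
  exists P', [/\ size P' = n, symp P', normP (odd n./2) P'
                & forall w, orthP w P -> orthP w P'].
Proof.
elim/ltn_ind: n => n IH [|[a0 b0] [|[a1 b1] rest]] /=.
- by move=> <- _ _; exists [::].
- move=> <- sP /and3P[Qa Qb _]; exists [:: (a0, b0)]; split => //=.
  by rewrite Qa Qb.
move=> Hn sP aP; crush.
have Hlt : (size rest < n)%N by rewrite -Hn.
have [R [HR1 HR2 HR3 HR4]] := IH _ Hlt rest erefl ltac:(assumption) ltac:(assumption).
rewrite -Hn /=.
move: HR3; case: (odd (size rest)./2) => /= HR3.
- case: R HR1 HR2 HR3 HR4 => [|[x y] R'] HR1 HR2 HR3 HR4; first by [].
  rewrite /normP in HR3; propagate; crush.
  exists ((a0, b0) :: (a1 + x, b1 + x) :: (a1 + b1 + y, a1 + b1 + x + y) :: R').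
  split => //=.
  + by rewrite -HR1.
  goalsplit; leaf.
  + rewrite /normP; goalsplit; leaf.
  + move=> w Hw; crush; propagate; crush; goalsplit; leaf.
- propagate; exists ((a1, b1) :: (a0, b0) :: R); split => //=.
  + by rewrite HR1.
  + goalsplit; leaf.
  + goalsplit; leaf.
  + move=> w Hw; crush; propagate; crush; goalsplit; leaf.
Qed.

Lemma norm_alt n : forall P, size P = n -> symp P -> normP (odd n./2) P ->
  exists P', [/\ size P' = n, symp P', altQ false P'
                & forall w, orthP w P -> orthP w P'].
Proof.
elim/ltn_ind: n => n IH [|[a0 b0] [|[a1 b1] rest]].
- by move=> <- _ _; exists [::].
- move=> <- sP HN; exists [:: (a0, b0)]; split => //.
  rewrite /normP /allhyp /= in HN; crush; goalsplit; leaf.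
move=> Hn sP; rewrite -Hn /=.
have Hlt : (size rest < n)%N by rewrite -Hn.
case Ho: (odd (size rest)./2) => /= HN.
-
  case: rest Hn Hlt Ho HN sP => [|[a2 b2] rest'] Hn Hlt Ho HN sP; first by [].
  rewrite /normP /allhyp /= in HN; crush.
  have sN : symp ((a2 + b2, a1 + b1 + a2) :: rest') by goalsplit; leaf.
  have nN : normP true ((a2 + b2, a1 + b1 + a2) :: rest') by rewrite /normP; goalsplit; leaf.
  have Hlt' : ((size rest').+1 < n)%N by rewrite -Hn.
  have Ho' : odd ((size rest').+1)./2 = true by exact: Ho.
  have nN' : normP (odd ((size rest').+1)./2) ((a2 + b2, a1 + b1 + a2) :: rest') by rewrite Ho'.
  have [R [HR1 HR2 HR3 HR4]] := IH _ Hlt' ((a2 + b2, a1 + b1 + a2) :: rest') erefl sN nN'.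
  have o1 : orthP a0 ((a2 + b2, a1 + b1 + a2) :: rest') by goalsplit; leaf.
  have o2 : orthP b0 ((a2 + b2, a1 + b1 + a2) :: rest') by goalsplit; leaf.
  have o3 : orthP (a1 + a2 + b2) ((a2 + b2, a1 + b1 + a2) :: rest') by goalsplit; leaf.
  have o4 : orthP (b1 + a2 + b2) ((a2 + b2, a1 + b1 + a2) :: rest') by goalsplit; leaf.
  have := HR4 _ o1; have := HR4 _ o2; have := HR4 _ o3; have := HR4 _ o4.
  move=> p4 p3 p2 p1.
  exists ((a0, b0) :: (a1 + a2 + b2, b1 + a2 + b2) :: R); split.
  + by rewrite /= HR1.
  + goalsplit; leaf.
  + goalsplit; leaf.
  + move=> w Hw; crush.
    have ow : orthP w ((a2 + b2, a1 + b1 + a2) :: rest') by goalsplit; leaf.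
    have := HR4 _ ow => ow'. goalsplit; leaf.
-
  rewrite /normP in HN; crush.
  have nR : normP (odd (size rest)./2) rest by rewrite Ho.
  have [R [HR1 HR2 HR3 HR4]] := IH _ Hlt rest erefl ltac:(assumption) nR.
  propagate.
  exists ((a1, b1) :: (a0, b0) :: R); split.
  + by rewrite /= HR1.
  + goalsplit; leaf.
  + goalsplit; leaf.
  + move=> w Hw; crush; propagate; goalsplit; leaf.
Qed.

Local Notation d0 := ((0 : V), (0 : V)).

Lemma symp_nth P : symp P -> forall i j, (i < size P)%N -> (j < size P)%N ->
  [/\ B (nth d0 P i).1 (nth d0 P j).2 = (i == j)%:R,
      B (nth d0 P i).1 (nth d0 P j).1 = 0 &
      B (nth d0 P i).2 (nth d0 P j).2 = 0].
Proof.
elim: P => [|[a b] P IH] //= /and4P[/eqP Bab /(all_nthP d0) oa /(all_nthP d0) ob sP].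
case=> [|i] [|j] //= hi hj; rewrite ?ltnS in hi hj.
- by rewrite Bab !Bxx.
- by case/andP: (oa j hj) => /eqP -> /eqP ->; case/andP: (ob j hj) => _ /eqP ->.
- case/andP: (oa i hi) => /eqP h1 /eqP h2; case/andP: (ob i hi) => /eqP h3 /eqP h4.
  by rewrite Bsym h3 Bsym h1 Bsym h4.
- exact: IH.
Qed.

Lemma symp_of_nth P : (forall i j, (i < size P)%N -> (j < size P)%N ->
  [/\ B (nth d0 P i).1 (nth d0 P j).2 = (i == j)%:R,
      B (nth d0 P i).1 (nth d0 P j).1 = 0 &
      B (nth d0 P i).2 (nth d0 P j).2 = 0]) -> symp P.
Proof.
elim: P => [|[a b] P IH] //= H.
have [h1 _ _] := H 0%N 0%N erefl erefl.
rewrite /= in h1; rewrite h1 eqxx /=.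
apply/and3P; split.
- apply/(all_nthP d0) => j hj.
  by have [/= -> -> _] := H 0%N j.+1 erefl hj.
- apply/(all_nthP d0) => j hj.
  have [/= h2 _ h3] := H j.+1 0%N hj erefl.
  have [/= h4 _ _] := H 0%N j.+1 erefl hj.
  by rewrite Bsym h2 Bsym h3.
- apply: IH => i j hi hj; exact: (H i.+1 j.+1).
Qed.

Lemma free_dual (X Y : seq V) : size X = size Y ->
  (forall i j, (i < size X)%N -> (j < size X)%N -> B X`_i Y`_j = (i == j)%:R) -> free X.
Proof.
move=> _ H; rewrite -[X]/(tval (in_tuple X)); apply/freeP => k Hk i.
have := congr1 (fun v => B v Y`_i) Hk; rewrite B0l Bsuml /=.
under eq_bigr do rewrite BZl (H _ _ (ltn_ord _) (ltn_ord i)).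
rewrite (bigD1 i) //= eqxx mulr1 big1 ?addr0 //.
by move=> j ji; rewrite (inj_eq val_inj) (negbTE ji) mulr0.
Qed.

Lemma size_of_basis (X : seq V) : basis_of fullv X -> size X = \dim (fullv : {vspace V}).
Proof. by move/andP => [/eqP HU /eqnP Hf]; rewrite -HU Hf. Qed.

Lemma basis_of_free (X : seq V) : free X -> size X = \dim (fullv : {vspace V}) -> basis_of fullv X.
Proof. by move=> fX sX; rewrite basisEfree fX subvf sX leqnn. Qed.

Lemma free_symp P : symp P -> free (map fst P ++ map snd P).
Proof.
move=> sP; apply: (@free_dual _ (map snd P ++ map fst P)).
  by rewrite !size_cat !size_map.
rewrite size_cat !size_map => i j hi hj.
rewrite !nth_cat !size_map.
case: (ltnP i (size P)) => hi'; case: (ltnP j (size P)) => hj'.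
- rewrite (nth_map d0) // (nth_map d0) //; by have [-> _ _] := symp_nth sP hi' hj'.
- have hj2 : (j - size P < size P)%N by lia.
  rewrite (nth_map d0) // (nth_map d0) //; have [_ -> _] := symp_nth sP hi' hj2.
  rewrite (_ : (i == j) = false) //; apply/negbTE/eqP; lia.
- have hi2 : (i - size P < size P)%N by lia.
  rewrite (nth_map d0) // (nth_map d0) //; have [_ _ ->] := symp_nth sP hi2 hj'.
  rewrite (_ : (i == j) = false) //; apply/negbTE/eqP; lia.
- have hi2 : (i - size P < size P)%N by lia.
  have hj2 : (j - size P < size P)%N by lia.
  rewrite (nth_map d0) // (nth_map d0) // Bsym; have [-> _ _] := symp_nth sP hj2 hi2.
  case: (i =P j) => [->|ne]; first by rewrite eqxx.
  rewrite (_ : (j - size P == i - size P)%N = false) //; apply/negbTE/eqP; lia.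
Qed.

Lemma sym_free (s : seq V) :
  (forall i j, (i < size s)%N -> (j < size s)%N -> B s`_i s`_j = (i != j)%:R) ->
  ~~ odd (size s) -> free s.
Proof.
move=> H ev; rewrite -[s]/(tval (in_tuple s)); apply/freeP => k Hk.
set S := \sum_(i < size s) k i.
have Hj : forall j : 'I_(size s), k j = S.
  move=> j; have := congr1 (fun v => B v s`_j) Hk; rewrite B0l Bsuml /=.
  under eq_bigr do rewrite BZl (H _ _ (ltn_ord _) (ltn_ord j)).
  rewrite (bigD1 j) //= eqxx mulr0 add0r => HH.
  rewrite /S (bigD1 j) //= (eq_bigr (fun i : 'I_(size s) => k i * (i != j :> nat)%:R)) => [|i ij].
    by rewrite HH addr0.
  by rewrite (inj_eq val_inj) ij mulr1.
have S0 : S = 0.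
  rewrite {1}/S (eq_bigr (fun _ => S)) => [|i _]; last exact: Hj.
  rewrite sumr_const card_ord -(odd_double_half (size s)) (negbTE ev) add0n.
  by rewrite -mul2n mulrnA mulr2n F2_addrr mul0rn.
by move=> i; rewrite Hj.
Qed.

Lemma famb_index (s : seq V) : famb false s ->
  (forall i j, (i < size s)%N -> (j < size s)%N -> B s`_i s`_j = (i != j)%:R) /\
  (forall i, (i < size s)%N -> Q s`_i = 0).
Proof.
case/andP => /(all_nthP 0) Hq /(pairwiseP 0) Hp; split; last by move=> i hi; apply/eqP/Hq.
move=> i j hi hj; case: (ltngtP i j) => h.
- by rewrite (eqP (Hp i j hi hj h)).
- by rewrite Bsym (eqP (Hp j i hj hi h)).
- by rewrite h Bxx.
Qed.

Lemma index_famb (s : seq V) :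
  (forall i j, (i < size s)%N -> (j < size s)%N -> i != j -> B s`_i s`_j = 1) ->
  (forall i, (i < size s)%N -> Q s`_i = 0) -> famb false s.
Proof.
move=> Hb Hq; apply/andP; split; first by apply/(all_nthP 0) => i hi; rewrite Hq.
apply/(pairwiseP 0) => i j hi hj h; rewrite Hb // ltn_eqF //.
Qed.

Lemma nth_ordmap (T : Type) (d : T) n (g : 'I_n -> T) k (hk : (k < n)%N) :
  nth d [seq g i | i <- enum 'I_n] k = g (Ordinal hk).
Proof.
rewrite (nth_map (Ordinal hk)) ?size_enum_ord //; congr g; apply: val_inj.
by rewrite /= nth_enum_ord.
Qed.

Lemma enum_map_nth (T T' : Type) (d : T) (s : seq T) (h : T -> T') :
  [seq h (nth d s (nat_of_ord i)) | i <- enum 'I_(size s)] = map h s.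
Proof.
apply: (@eq_from_nth _ (h d)); first by rewrite [LHS]size_map [RHS]size_map size_enum_ord.
move=> k hk; rewrite size_map size_enum_ord in hk.
by rewrite (nth_map d) // (nth_ordmap (h d) (fun i : 'I_(size s) => h (nth d s i)) hk).
Qed.

End QF.

Lemma par4 r : odd r./2 = ((r %% 4 == 2) || (r %% 4 == 3))%N.
Proof.
have -> : odd r./2 = ((r %/ 2) %% 2 == 1)%N by rewrite -divn2 modn2; case: odd.
apply/idP/idP; lia.
Qed.


Section H.
Variables (V : vectType 'F_2) (Q : V -> 'F_2).
Hypothesis qf : is_quadratic_form Q.
Local Notation B := (assoc_bilin Q).
Local Notation d0 := ((0 : V), (0 : V)).

Lemma hyp_list n (e f : 'I_n -> V) :
  (forall i j : 'I_n,
      [/\ Q (e i) = 0, Q (f i) = 0,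
          B (e i) (e j) = 0, B (f i) (f j) = 0 &
          B (e i) (f j) = (i == j)%:R]) ->
  [/\ size [seq (e i, f i) | i <- enum 'I_n] = n,
      symp Q [seq (e i, f i) | i <- enum 'I_n] &
      allhyp Q [seq (e i, f i) | i <- enum 'I_n]].
Proof.
move=> H; split.
- by rewrite size_map size_enum_ord.
- apply: symp_of_nth => i j; rewrite size_map size_enum_ord => hi hj.
  rewrite !(nth_ordmap _ _ hi) !(nth_ordmap _ _ hj) /=.
  by have [_ _ -> -> ->] := H (Ordinal hi) (Ordinal hj).
- apply/(all_nthP d0) => i; rewrite size_map size_enum_ord => hi.
  rewrite (nth_ordmap _ _ hi) /=.
  by have [-> -> _ _ _] := H (Ordinal hi) (Ordinal hi); rewrite eqxx.
Qed.

Lemma orth_list n (e f : 'I_n -> V) x :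
  (forall i : 'I_n, B (e i) x = 0 /\ B (f i) x = 0) ->
  orthP Q x [seq (e i, f i) | i <- enum 'I_n].
Proof.
move=> H; apply/(all_nthP d0) => i; rewrite size_map size_enum_ord => hi.
rewrite (nth_ordmap _ _ hi) /=.
have [h1 h2] := H (Ordinal hi).
by rewrite Bsym h1 Bsym h2 eqxx.
Qed.

Lemma list_hyp P : symp Q P -> allhyp Q P ->
  forall i j : 'I_(size P),
      [/\ Q (nth d0 P i).1 = 0, Q (nth d0 P i).2 = 0,
          B (nth d0 P i).1 (nth d0 P j).1 = 0, B (nth d0 P i).2 (nth d0 P j).2 = 0 &
          B (nth d0 P i).1 (nth d0 P j).2 = (i == j)%:R].
Proof.
move=> sP /(all_nthP d0) aP i j.
have [h1 h2 h3] := symp_nth qf sP (ltn_ord i) (ltn_ord j).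
by case/andP: (aP i (ltn_ord i)) => /eqP -> /eqP ->; split.
Qed.

End H.

Unset Implicit Arguments.

Theorem theorem3p5 (V : vectType 'F_2) (r : nat) (Q : V -> 'F_2) :
  (1 <= r)%N -> \dim (fullv : {vspace V}) = (2 * r)%N ->
  is_quadratic_form Q -> qf_nondegenerate Q ->
  (has_symmetric_basis Q <->
     (qf_hyperbolic Q /\ (r %% 4 = 0 \/ r %% 4 = 1)%N) \/
     (qf_elliptic Q /\ (r %% 4 = 2 \/ r %% 4 = 3)%N)).
Proof.
move=> r1 hdim qf _; split.
- case=> s [bs [Hq Hb]].
  have ss := size_of_basis bs; rewrite hdim in ss.
  have fs : famb Q false s by apply: index_famb.
  have [P [hP1 hP2 hP3 _]] := fam_decomp qf ss fs.
  have [P' [h1 h2 h3 _]] := alt_norm qf hP1 hP2 hP3.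
  have hpar := par4 r.
  case Hodd: (odd r./2) h3 hpar => h3 hpar.
  + right; split; last by move: hpar => /esym /orP[/eqP->|/eqP->]; [left|right].
    case: P' h1 h2 h3 => [|[x y] P''] h1 h2 h3 //=.
    case/and3P: h3 => /eqP Qx /eqP Qy aP.
    have sP'' : symp Q P'' by case/and4P: h2.
    pose e := fun i : 'I_(size P'') => (nth (0, 0) P'' i).1.
    pose f := fun i : 'I_(size P'') => (nth (0, 0) P'' i).2.
    exists (size P''), e, f, x, y.
    split; [|split; [|split; [|split; [|split]]]].
    * rewrite /e /f !(enum_map_nth (0, 0) P'').
      have pe : perm_eq ([seq i.1 | i <- (x, y) :: P''] ++ [seq i.2 | i <- (x, y) :: P''])
                        ([seq i.1 | i <- P''] ++ [seq i.2 | i <- P''] ++ [:: x; y]).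
        by apply/permP => p; rewrite !count_cat /=; lia.
      rewrite -(perm_basis _ pe); apply: basis_of_free (free_symp qf h2) _.
      rewrite size_cat !size_map h1 hdim; lia.
    * exact: list_hyp.
    * move=> i; have hi : (i.+1 < size ((x, y) :: P''))%N by rewrite /= ltnS.
      have [a1 a2 a3] := symp_nth qf h2 hi (erefl : (0 < size ((x, y) :: P''))%N).
      have [b1 b2 b3] := symp_nth qf h2 (erefl : (0 < size ((x, y) :: P''))%N) hi.
      rewrite /e /f; split => //=; rewrite /= in a1 a2 a3 b1 b2 b3 => //.
      by rewrite Bsym b1.
    * exact: Qx.
    * exact: Qy.
    * by case/and4P: h2 => /eqP.
  + left; split; last by move: hpar; lia.
    pose e := fun i : 'I_(size P') => (nth (0, 0) P' i).1.
    pose f := fun i : 'I_(size P') => (nth (0, 0) P' i).2.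
    exists (size P'), e, f; split.
    * rewrite /e /f !(enum_map_nth (0, 0) P').
      apply: basis_of_free (free_symp qf h2) _.
      rewrite size_cat !size_map h1 hdim; lia.
    * exact: list_hyp.
- have fin : forall P2, size P2 = r -> symp Q P2 -> altQ Q false P2 -> has_symmetric_basis Q.
    move=> P2 q1 q2 q3.
    have [s [s1 s2 _]] := fam_build qf q2 q3.
    have [Hb Hq] := famb_index qf s2.
    exists s; split; [|split].
    + apply: basis_of_free; last by rewrite s1 q1 hdim.
      by apply: (sym_free qf Hb); rewrite s1 mul2n odd_double.
    + exact: Hq.
    + by move=> i j hi hj ij; rewrite Hb // ij.
  case=> [[[n [e [f [bh Hg]]]] hr] | [[n [e [f [x [y [bh [Hg [Ho [Qx [Qy Bxy]]]]]]]]]] hr]].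
  + have sz := size_of_basis bh; rewrite size_cat size_map size_enum_ord size_map size_enum_ord hdim in sz.
    have [p1 p2 p3] := hyp_list Hg.
    have hN : normP Q (odd (size [seq (e i, f i) | i <- enum 'I_n])./2)
                [seq (e i, f i) | i <- enum 'I_n].
      rewrite p1 (_ : odd n./2 = false) //.
      by rewrite par4; case: hr => /eqP h; apply/negbTE; lia.
    have [P2 [q1 q2 q3 _]] := norm_alt qf erefl p2 hN.
    apply: (fin P2) => //; rewrite q1 p1; lia.
  + have sz := size_of_basis bh; rewrite !size_cat size_map size_enum_ord size_map size_enum_ord hdim /= in sz.
    have [p1 p2 p3] := hyp_list Hg.
    set P0 := [seq (e i, f i) | i <- enum 'I_n] in p1 p2 p3.
    have ox : orthP Q x P0 by apply: orth_list => i; have [] := Ho i.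
    have oy : orthP Q y P0 by apply: orth_list => i; have [] := Ho i.
    have sP : symp Q ((x, y) :: P0) by rewrite symp_cons Bxy eqxx ox oy p2.
    have hN : normP Q (odd (size ((x, y) :: P0))./2) ((x, y) :: P0).
      rewrite /= p1 (_ : odd n.+1./2 = true); last first.
        by rewrite par4; case: hr => /eqP h; lia.
      by rewrite /normP Qx Qy p3 !eqxx.
    have [P2 [q1 q2 q3 _]] := norm_alt qf erefl sP hN.
    apply: (fin P2) => //; rewrite q1 /= p1; lia.
Qed.
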